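(* Let $n\in\mathbb{N}$, $x,y\in(0,1)$ with $x\ne y$, $z=\tfrac{x+y}{2}$, and for $k=0,1,\dots,2n$ put \[ d_k=\tfrac12\Bigl[\tbinom{2n}{k}x^k(1-x)^{2n-k}+\tbinom{2n}{k}y^k(1-y)^{2n-k}\Bigr]-\tbinom{2n}{k}z^k(1-z)^{2n-k}. \] Then there exist real numbers $0<t_1<t_2<2n$ such that $d_k>0$ for integers $0\le k<t_1$, $d_k<0$ for integers $t_1<k<t_2$, and $d_k>0$ for integers $t_2<k\le 2n$ (with at least one integer $k$ satisfying $d_k<0$). *)

(* Defs.v *)
From Stdlib Require Import Reals Lra.
Open Scope R_scope.

Definition bin_pmf (m k : nat) (p : R) : R :=
  C m k * p ^ k * (1 - p) ^ (m - k).

Definition dk (n : nat) (x y : R) (k : nat) : R :=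
  / 2 * (bin_pmf (2 * n) k x + bin_pmf (2 * n) k y)
  - bin_pmf (2 * n) k ((x + y) / 2).

(* Main.v *)
Require Import Defs.
From Stdlib Require Import Reals Lra Lia Psatz Classical.
Open Scope R_scope.

Definition cvx (h : nat -> R) (m : nat) :=
  forall k, (k+2 <= m)%nat -> h k + h (k+2)%nat > 2 * h (k+1)%nat.

Lemma L1 h m : cvx h m -> forall l p, (l < p)%nat -> (p+1 <= m)%nat ->
  h (l+1)%nat - h l < h (p+1)%nat - h p.
Proof.
  intros C l p; induction p as [|p IH]; intros Hlp Hpm; [lia|].
  assert (Hc := C p ltac:(lia)).
  replace (p+2)%nat with (S p + 1)%nat in Hc by lia.
  replace (p+1)%nat with (S p) in Hc by lia.
  destruct (Nat.eq_dec l p) as [->|Hne].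
  - replace (p+1)%nat with (S p) by lia. lra.
  - assert (IH' := IH ltac:(lia) ltac:(lia)).
    replace (p+1)%nat with (S p) in IH' by lia. lra.
Qed.

Lemma L3 h m l j : cvx h m -> h l <= h (l+1)%nat -> (l+1 <= j)%nat ->
  forall q, (j < q)%nat -> (q <= m)%nat -> h j < h q.
Proof.
  intros C Hl Hj q; induction q as [|q IH]; intros Hjq Hqm; [lia|].
  assert (Hinc : h q < h (S q)).
  { assert (H := L1 h m C l q ltac:(lia) ltac:(lia)).
    replace (q+1)%nat with (S q) in H by lia. lra. }
  destruct (Nat.eq_dec j q) as [->|Hne]; [lra|].
  assert (H := IH ltac:(lia) ltac:(lia)). lra.
Qed.

Lemma L4 h : forall j i, (i < j)%nat -> h i <= h j ->
  exists l, (i <= l)%nat /\ (l < j)%nat /\ h l <= h (l+1)%nat.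
Proof.
  induction j as [|j IH]; intros i Hij Hh; [lia|].
  destruct (Rle_dec (h j) (h (S j))) as [Hle|Hnle].
  - exists j. replace (j+1)%nat with (S j) by lia. split; [lia|split;[lia|lra]].
  - destruct (Nat.eq_dec i j) as [->|Hne]; [lra|].
    destruct (IH i ltac:(lia) ltac:(lra)) as [l [H1 [H2 H3]]].
    exists l; split; [lia|split;[lia|lra]].
Qed.

Lemma Qc h m i j k : cvx h m -> (i < j)%nat -> (j < k)%nat -> (k <= m)%nat ->
  h i <= h j -> h j < h k.
Proof.
  intros C Hij Hjk Hkm Hh.
  destruct (L4 h j i Hij Hh) as [l [H1 [H2 H3]]].
  exact (L3 h m l j C H3 ltac:(lia) k Hjk Hkm).
Qed.

Lemma least h : forall N, (exists j, (j <= N)%nat /\ h j < 0) ->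
  exists a, (a <= N)%nat /\ h a < 0 /\ forall k, (k < a)%nat -> 0 <= h k.
Proof.
  induction N as [|N IH]; intros [j [Hj Hh]].
  - exists 0%nat. replace j with 0%nat in Hh by lia. split; [lia|split;[lra|intros; lia]].
  - destruct (classic (exists j, (j <= N)%nat /\ h j < 0)) as [E|NE].
    + destruct (IH E) as [a [H1 [H2 H3]]]. exists a; split; [lia|auto].
    + exists j. split; [lia|split;[auto|]]. intros k Hk.
      destruct (Rle_dec 0 (h k)) as [?|Hn]; [auto|].
      exfalso; apply NE; exists k; split; [lia|lra].
Qed.

Lemma greatest h m : (exists j, (j <= m)%nat /\ h j < 0) ->
  exists b, (b <= m)%nat /\ h b < 0 /\ forall k, (b < k)%nat -> (k <= m)%nat -> 0 <= h k.
Proof.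
  intros [j [Hj Hh]].
  destruct (least (fun k => h (m - k)%nat) m) as [a [H1 [H2 H3]]].
  { exists (m - j)%nat. split; [lia|]. replace (m - (m-j))%nat with j by lia. auto. }
  exists (m - a)%nat. split; [lia|split;[auto|]].
  intros k Hk Hkm. assert (H := H3 (m - k)%nat ltac:(lia)). simpl in H.
  replace (m - (m-k))%nat with k in H by lia. auto.
Qed.

Lemma H1n k j : INR k < INR j + 1/2 -> (k <= j)%nat.
Proof.
  intros H. destruct (Compare_dec.le_lt_dec k j) as [?|Hl]; auto.
  apply le_INR in Hl. rewrite S_INR in Hl. lra.
Qed.
Lemma H2n k j : INR j + 1/2 < INR k -> (j < k)%nat.
Proof.
  intros H. destruct (Compare_dec.le_lt_dec k j) as [Hl|?]; auto.
  apply le_INR in Hl. lra.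
Qed.

Lemma comb (h : nat -> R) (m : nat) : (2 <= m)%nat -> h 0%nat > 0 -> h m > 0 ->
  (exists j, (j <= m)%nat /\ h j < 0) -> cvx h m ->
  exists t1 t2, 0 < t1 /\ t1 < t2 /\ t2 < INR m /\
   (forall k, INR k < t1 -> h k > 0) /\
   (forall k, t1 < INR k < t2 -> h k < 0) /\
   (forall k, t2 < INR k -> (k <= m)%nat -> h k > 0) /\
   (exists k, t1 < INR k < t2).
Proof.
  intros Hm H0 Hmp E C.
  destruct (least h m E) as [a [Ha1 [Ha2 Ha3]]].
  destruct (greatest h m E) as [b [Hb1 [Hb2 Hb3]]].
  assert (Hab : (a <= b)%nat).
  { destruct (Compare_dec.le_lt_dec a b); auto. assert (H := Hb3 a ltac:(lia) Ha1). lra. }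
  assert (Hbm : (b < m)%nat).
  { destruct (Nat.eq_dec b m) as [->|?]; [lra|lia]. }
  destruct a as [|a0]; [lra|].
  assert (Mid : forall k, (S a0 <= k)%nat -> (k <= b)%nat -> h k < 0).
  { intros k Hk1 Hk2.
    destruct (Nat.eq_dec k (S a0)) as [->|N1]; auto.
    destruct (Nat.eq_dec k b) as [->|N2]; auto.
    destruct (Rlt_dec (h k) 0) as [?|Hn]; auto.
    assert (H := Qc h m (S a0) k b C ltac:(lia) ltac:(lia) ltac:(lia) ltac:(lra)). lra. }
  assert (Left : forall k, (k + 1 < S a0)%nat -> h k > 0).
  { intros k Hk. assert (Hk0 := Ha3 k ltac:(lia)).
    destruct (Rle_lt_or_eq_dec _ _ Hk0) as [?|Heq]; [lra|].
    assert (Ha0 := Ha3 a0 ltac:(lia)).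
    assert (H := Qc h m k a0 (S a0) C ltac:(lia) ltac:(lia) ltac:(lia) ltac:(lra)). lra. }
  assert (Right : forall k, (b + 1 < k)%nat -> (k <= m)%nat -> h k > 0).
  { intros k Hk Hkm. assert (Hk0 := Hb3 k ltac:(lia) Hkm).
    destruct (Rle_lt_or_eq_dec _ _ Hk0) as [?|Heq]; [lra|].
    assert (Hb0 := Hb3 (b+1)%nat ltac:(lia) ltac:(lia)).
    assert (H := Qc h m b (b+1) k C ltac:(lia) ltac:(lia) ltac:(lia) ltac:(lra)). lra. }
  assert (Ia := pos_INR a0). assert (Iab := le_INR _ _ Hab). rewrite S_INR in Iab.
  assert (Ibm := lt_INR _ _ Hbm). assert (Hbm' := le_INR _ _ Hbm).
  rewrite S_INR in Hbm'.
  assert (LeftT : exists t1, INR a0 <= t1 /\ t1 < INR a0 + 1 /\ 0 < t1 /\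
            forall k, INR k < t1 -> h k > 0).
  { destruct (Rlt_dec 0 (h a0)) as [Hp|Hnp].
    - exists (INR a0 + 1/2). split; [lra|split;[lra|split;[lra|]]].
      intros k Hk. apply H1n in Hk. destruct (Nat.eq_dec k a0) as [->|?]; auto.
      apply Left; lia.
    - assert (Hz : h a0 = 0) by (assert (H := Ha3 a0 ltac:(lia)); lra).
      destruct a0 as [|a1]; [lra|].
      exists (INR (S a1)). rewrite S_INR. assert (I1 := pos_INR a1).
      split; [lra|split;[lra|split;[lra|]]].
      intros k Hk. rewrite <- S_INR in Hk. apply INR_lt in Hk. apply Left; lia. }
  assert (RightT : exists t2, INR b < t2 /\ t2 <= INR b + 1 /\ t2 < INR m /\
            forall k, t2 < INR k -> (k <= m)%nat -> h k > 0).
  { destruct (Rlt_dec 0 (h (b+1)%nat)) as [Hp|Hnp].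
    - exists (INR b + 1/2). split; [lra|split;[lra|split;[lra|]]].
      intros k Hk Hkm. apply H2n in Hk. destruct (Nat.eq_dec k (b+1)) as [->|?]; auto.
      apply Right; lia.
    - assert (Hz : h (b+1)%nat = 0) by (assert (H := Hb3 (b+1)%nat ltac:(lia) ltac:(lia)); lra).
      assert (Hb1m : (b + 1 < m)%nat).
      { destruct (Nat.eq_dec (b+1) m) as [Heq|?]; [rewrite Heq in Hz; lra|lia]. }
      exists (INR (b+1)). apply lt_INR in Hb1m. rewrite plus_INR in *. simpl in *.
      split; [lra|split;[lra|split;[lra|]]].
      intros k Hk Hkm. replace (INR b + 1) with (INR (b+1)) in Hk by (rewrite plus_INR; simpl; ring). apply INR_lt in Hk. apply Right; lia. }
  destruct LeftT as [t1 [T1 [T2 [T3 T4]]]].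
  destruct RightT as [t2 [U1 [U2 [U3 U4]]]].
  exists t1, t2. split; [lra|split;[lra|split;[lra|split;[auto|split;[|split;[auto|]]]]]].
  - intros k [Hk1 Hk2]. apply Mid.
    + destruct (Compare_dec.le_lt_dec (S a0) k) as [?|Hl]; auto. apply le_INR in Hl.
      rewrite !S_INR in Hl. lra.
    + destruct (Compare_dec.le_lt_dec k b) as [?|Hl]; auto. apply le_INR in Hl.
      rewrite S_INR in Hl. lra.
  - exists (S a0). rewrite S_INR. lra.
Qed.

Lemma C_pos m j : (j <= m)%nat -> 0 < C m j.
Proof.
  intros. unfold C. apply Rdiv_lt_0_compat. apply INR_fact_lt_0.
  apply Rmult_lt_0_compat; apply INR_fact_lt_0.
Qed.

Lemma pow_split a b j : b <> 0 -> a ^ j = b ^ j * (a / b) ^ j.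
Proof. intros. rewrite <- Rpow_mult_distr. f_equal. field. auto. Qed.

Lemma pow_gt2 t : t <> 0 -> -1 < t < 1 -> forall m, (1+t)^(m+2) + (1-t)^(m+2) > 2.
Proof.
  intros Ht Hb m; induction m as [|m IH].
  - simpl. nra.
  - assert (Hs : t * (1+t)^(m+2) - t * (1-t)^(m+2) >= 0).
    { destruct (Rlt_dec 0 t).
      + assert ((1-t)^(m+2) <= (1+t)^(m+2)) by (apply pow_incr; lra). nra.
      + assert ((1+t)^(m+2) <= (1-t)^(m+2)) by (apply pow_incr; lra). nra. }
    replace (S m + 2)%nat with (S (m+2)) by lia. simpl. lra.
Qed.

Lemma binsum p m : sum_f_R0 (fun i => bin_pmf m i p) m = 1.
Proof.
  unfold bin_pmf. rewrite <- binomial. replace (p + (1-p)) with 1 by ring. apply pow1.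
Qed.

Lemma sum_lin (f g k : nat -> R) N :
  sum_f_R0 (fun i => / 2 * (f i + g i) - k i) N =
  / 2 * (sum_f_R0 f N + sum_f_R0 g N) - sum_f_R0 k N.
Proof. induction N; simpl; [ring|rewrite IHN; ring]. Qed.

Lemma sum_ge0 (f : nat -> R) N : (forall j, (j <= N)%nat -> 0 <= f j) -> sum_f_R0 f N >= f 0%nat.
Proof.
  induction N; intros H; simpl; [lra|].
  assert (H1 := IHN (fun j Hj => H j ltac:(lia))). assert (H2 := H (S N) ltac:(lia)). lra.
Qed.

Lemma key m j x y z : z <> 0 -> 1 - z <> 0 ->
  / 2 * (bin_pmf m j x + bin_pmf m j y) - bin_pmf m j z =
  C m j * (z^j*(1-z)^(m-j)) *
  (((x/z)^j*((1-x)/(1-z))^(m-j) + (y/z)^j*((1-y)/(1-z))^(m-j))/2 - 1).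
Proof.
  intros Hz Hz'. unfold bin_pmf.
  rewrite (pow_split x z j Hz), (pow_split y z j Hz), (pow_split (1-x) (1-z) (m-j) Hz'),
    (pow_split (1-y) (1-z) (m-j) Hz'). set (a1 := z^j); set (a2 := (1-z)^(m-j)); set (a3 := (x/z)^j); set (a4 := ((1-x)/(1-z))^(m-j)); set (a5 := (y/z)^j); set (a6 := ((1-y)/(1-z))^(m-j)); clearbody a1 a2 a3 a4 a5 a6; field.
Qed.

Lemma cA p q m k : (k+2 <= m)%nat ->
  p^k*q^(m-k) + p^(k+2)*q^(m-(k+2)) - 2*(p^(k+1)*q^(m-(k+1))) =
  p^k*q^(m-(k+2))*(p-q)^2.
Proof.
  intros H. replace (m-(k+1))%nat with (m-(k+2)+1)%nat by lia.
  replace (m-k)%nat with (m-(k+2)+2)%nat by lia. rewrite !pow_add. ring.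
Qed.

Lemma sqp d : d <> 0 -> 0 < d^2.
Proof. intros. destruct (Rtotal_order d 0) as [|[|]]; nra. Qed.

Lemma endpos a b m : 0 < a -> 0 < b -> a + b = 2 -> a <> 1 -> (2 <= m)%nat ->
  (a^m + b^m)/2 - 1 > 0.
Proof.
  intros Ha Hb Hs H1 Hm. assert (H := pow_gt2 (a-1) ltac:(lra) ltac:(lra) (m-2)).
  replace (m-2+2)%nat with m in H by lia.
  replace (1 + (a-1)) with a in H by ring. replace (1 - (a-1)) with b in H by lra. lra.
Qed.

Theorem mainTheorem4 (n : nat) (x y : R)
  (hn : (1 <= n)%nat)
  (hx : 0 < x < 1) (hy : 0 < y < 1) (hxy : x <> y) :
  exists t1 t2 : R,
    0 < t1 /\ t1 < t2 /\ t2 < INR (2 * n) /\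
    (forall k : nat, INR k < t1 -> dk n x y k > 0) /\
    (forall k : nat, t1 < INR k < t2 -> dk n x y k < 0) /\
    (forall k : nat, t2 < INR k -> (k <= 2 * n)%nat -> dk n x y k > 0) /\
    (exists k : nat, t1 < INR k < t2).
Proof.
  remember (2*n)%nat as m eqn:Hm.
  assert (Hm2 : (2 <= m)%nat) by lia.
  set (z := (x+y)/2).
  assert (Hz : 0 < z < 1) by (unfold z; lra).
  set (p1 := x/z). set (q1 := (1-x)/(1-z)). set (p2 := y/z). set (q2 := (1-y)/(1-z)).
  set (h := fun j => (p1^j*q1^(m-j) + p2^j*q2^(m-j))/2 - 1).
  assert (Key : forall j, dk n x y j = C m j * (z^j*(1-z)^(m-j)) * h j).
  { intros j. unfold dk. rewrite <- Hm. apply key; lra. }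
  assert (Pos : forall j, (j <= m)%nat -> 0 < C m j * (z^j*(1-z)^(m-j))).
  { intros j Hj. apply Rmult_lt_0_compat; [apply C_pos; auto|].
    apply Rmult_lt_0_compat; apply pow_lt; lra. }
  assert (Sg1 : forall j, (j <= m)%nat -> h j > 0 -> dk n x y j > 0).
  { intros j Hj Hh. rewrite Key. assert (P := Pos j Hj). nra. }
  assert (Sg2 : forall j, (j <= m)%nat -> h j < 0 -> dk n x y j < 0).
  { intros j Hj Hh. rewrite Key. assert (P := Pos j Hj). nra. }
  assert (Sg3 : forall j, (j <= m)%nat -> dk n x y j < 0 -> h j < 0).
  { intros j Hj Hh. rewrite Key in Hh. assert (P := Pos j Hj).
    destruct (Rlt_dec (h j) 0); auto. nra. }
  assert (Hp1 : 0 < p1) by (unfold p1; apply Rdiv_lt_0_compat; lra).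
  assert (Hp2 : 0 < p2) by (unfold p2; apply Rdiv_lt_0_compat; lra).
  assert (Hq1 : 0 < q1) by (unfold q1; apply Rdiv_lt_0_compat; lra).
  assert (Hq2 : 0 < q2) by (unfold q2; apply Rdiv_lt_0_compat; lra).
  assert (D1 : p1 - q1 <> 0).
  { replace (p1 - q1) with ((x - z) / (z * (1-z))) by (unfold p1, q1; field; lra).
    unfold Rdiv. apply Rmult_integral_contrapositive; split; [unfold z; lra|].
    apply Rinv_neq_0_compat. nra. }
  assert (D2 : p2 - q2 <> 0).
  { replace (p2 - q2) with ((y - z) / (z * (1-z))) by (unfold p2, q2; field; lra).
    unfold Rdiv. apply Rmult_integral_contrapositive; split; [unfold z; lra|].
    apply Rinv_neq_0_compat. nra. }
  assert (Cv : cvx h m).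
  { intros k Hk. unfold h.
    assert (E1 := cA p1 q1 m k Hk). assert (E2 := cA p2 q2 m k Hk).
    assert (S1 := sqp _ D1). assert (S2 := sqp _ D2).
    assert (P1 : 0 < p1^k*q1^(m-(k+2))) by (apply Rmult_lt_0_compat; apply pow_lt; lra).
    assert (P2 : 0 < p2^k*q2^(m-(k+2))) by (apply Rmult_lt_0_compat; apply pow_lt; lra).
    assert (0 < p1^k*q1^(m-(k+2)) * (p1-q1)^2) by (apply Rmult_lt_0_compat; auto).
    assert (0 < p2^k*q2^(m-(k+2)) * (p2-q2)^2) by (apply Rmult_lt_0_compat; auto).
    lra. }
  assert (H0 : h 0%nat > 0).
  { unfold h. rewrite Nat.sub_0_r. simpl pow at 1 3. rewrite !Rmult_1_l.
    apply endpos; auto.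
    - unfold q1, q2, z. field. lra.
    - intro E. apply D1. unfold q1 in E. unfold p1.
      assert (1 - x = 1 - z).
      { apply (Rmult_eq_reg_r (/ (1-z))); [|apply Rinv_neq_0_compat; lra].
        rewrite Rinv_r; [exact E|lra]. }
      unfold q1. replace x with z by lra. field; lra. }
  assert (Hmm : h m > 0).
  { unfold h. rewrite Nat.sub_diag. simpl pow at 2 4. rewrite !Rmult_1_r.
    apply endpos; auto.
    - unfold p1, p2, z. field. lra.
    - intro E. apply D1. unfold p1 in E. unfold q1.
      assert (x = z).
      { apply (Rmult_eq_reg_r (/ z)); [|apply Rinv_neq_0_compat; lra].
        rewrite Rinv_r; [exact E|lra]. }
      unfold p1. rewrite H. field; lra. }
  assert (Neg : exists j, (j <= m)%nat /\ h j < 0).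
  { destruct (classic (exists j, (j <= m)%nat /\ dk n x y j < 0)) as [[j [Hj Hd]]|NE].
    - exists j; split; auto.
    - exfalso.
      assert (Sum : sum_f_R0 (fun j => dk n x y j) m = 0).
      { unfold dk. rewrite <- Hm.
        rewrite (sum_lin (fun i => bin_pmf m i x) (fun i => bin_pmf m i y)
                   (fun i => bin_pmf m i ((x+y)/2))).
        rewrite !binsum. field. }
      assert (Ge := sum_ge0 (fun j => dk n x y j) m).
      assert (d0 := Sg1 0%nat ltac:(lia) H0).
      assert (0 <= 0) by lra.
      cut (sum_f_R0 (fun j => dk n x y j) m >= dk n x y 0%nat); [lra|].
      apply Ge. intros j Hj. destruct (Rle_dec 0 (dk n x y j)); auto.
      exfalso; apply NE; exists j; split; [auto|lra]. }
  destruct (comb h m Hm2 H0 Hmm Neg Cv) as [t1 [t2 [T1 [T2 [T3 [T4 [T5 [T6 T7]]]]]]]].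
  exists t1, t2. split; [exact T1|]. split; [exact T2|]. split; [exact T3|].
  split; [|split; [|split; [|exact T7]]].
  - intros k Hk. apply Sg1; [|apply T4; auto].
    assert (INR k < INR m) by lra. apply INR_lt in H. lia.
  - intros k Hk. apply Sg2; [|apply T5; auto].
    assert (INR k < INR m) by lra. apply INR_lt in H. lia.
  - intros k Hk Hkm. apply Sg1; auto.
Qed.
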